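(* Let $S=\{s_1<\dots<s_{k_1}\}$ and $T=\{t_1<\dots<t_{k_2}\}$ be nonempty subsets of $\{1,\dots,n-1\}$, let $d=\gcd\{s+t: s\in S,t\in T\}$ and $d'=\gcd(s_1,d)$. For a positive integer $i$ let $P_i=\{\ell\in\mathcal{I}_n : \ell\equiv is_1\pmod d\}$, where $\mathcal{I}_n=\{-n+1,\dots,n-1\}$ (integers). Then for every positive integer $i$: (a) $P_i=P_{i+d/d'}$; (b) $P_i,\dots,P_{i-1+d/d'}$ are mutually disjoint; (c) if $i\ge2$, then $P_i=\{\ell\in\mathcal{I}_n : \ell-s_1\in P_{i-1}\text{ or }\ell+t_1\in P_{i-1}\}$. *)

(* Defs.v *)
From mathcomp Require Import all_boot all_order all_algebra.
Set Implicit Arguments. Unset Strict Implicit. Unset Printing Implicit Defensive.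
Import Order.TTheory GRing.Theory Num.Theory.

Definition gcd_sums (n : nat) (S T : {set 'I_n}) : nat :=
  \big[gcdn/0%N]_(s in S) \big[gcdn/0%N]_(t in T) (s + t)%N.

Definition In_int (n : nat) (l : int) : bool :=
  ((- (n%:Z) < l) && (l < n%:Z))%R.

Definition Pset (n d s1 i : nat) (l : int) : bool :=
  In_int n l && (l == (i * s1)%N%:Z %[mod d%:Z])%Z.

(* Main.v *)
Require Import Defs.
From mathcomp Require Import all_boot all_order all_algebra.
From mathcomp Require Import zify ring.
Import Order.TTheory GRing.Theory Num.Theory.

Theorem lemma2p8 (n : nat) (S T : {set 'I_n}) (s1 t1 : 'I_n)
  (hS0 : forall s : 'I_n, s \in S -> (0 < s)%N)
  (hT0 : forall t : 'I_n, t \in T -> (0 < t)%N)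
  (hs1 : s1 \in S) (hs1min : forall s : 'I_n, s \in S -> (s1 <= s)%N)
  (ht1 : t1 \in T) (ht1min : forall t : 'I_n, t \in T -> (t1 <= t)%N) :
  let d := gcd_sums S T in
  let d' := gcdn s1 d in
  forall i : nat, (0 < i)%N ->
    (forall l : int, Pset n d s1 i l = Pset n d s1 (i + d %/ d') l)
 /\ (forall j k : nat, (i <= j)%N -> (j < k)%N -> (k <= i - 1 + d %/ d')%N ->
       forall l : int, ~~ (Pset n d s1 j l && Pset n d s1 k l))
 /\ ((2 <= i)%N -> forall l : int,
       Pset n d s1 i l =
       In_int n l && (Pset n d s1 (i - 1) (l - s1%:Z)%R
                      || Pset n d s1 (i - 1) (l + t1%:Z)%R)).
Proof.
move=> d d' i i0.
have hd : (d %| s1 + t1)%N.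
  rewrite /d /gcd_sums.
  apply: (@biggcdn_inf _ s1) => //.
  apply: (@biggcdn_inf _ t1) => //.
have s1p := hS0 _ hs1.
have d'p : (0 < d')%N by rewrite /d' gcdn_gt0 s1p.
have hd'd : (d' %| d)%N by exact: dvdn_gcdr.
have hd's : (d' %| s1)%N by exact: dvdn_gcdl.
have hgd : (d' = gcdn s1 d) by [].
clearbody d d'.
split; [|split].
- move=> l; rewrite /Pset; congr (_ && _).
  have -> : ((i + d %/ d') * s1 = (s1 %/ d')* d + i * s1)%N.
    rewrite mulnDl addnC; congr (_ + _)%N.
    move: (divnK hd's) (divnK hd'd).
    move: (s1 %/ d')%N (d %/ d')%N => a b <- <-.
    ring.
  by rewrite PoszD !PoszM modzMDl.
- move=> j k ij jk ki l; apply/negP => /andP [] /andP [] _ /eqP Hj /andP [] _ /eqP Hk.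
  have : (k * s1 == j * s1 %[mod d])%N.
    by apply/eqP; apply/eqP; rewrite -eqz_nat; apply/eqP; rewrite -!modz_nat -Hj -Hk.
  rewrite eqn_mod_dvd; last by rewrite leq_mul2r ltnW ?jk ?orbT.
  rewrite -mulnBl => H1.
  have H2 : (d %| (k - j) * d)%N by apply: dvdn_mull.
  have : (d %| (k - j) * d')%N by rewrite hgd muln_gcdr dvdn_gcd H1 H2.
  rewrite -{1}(divnK hd'd) dvdn_pmul2r // => H3.
  have := dvdn_leq _ H3.
  move: (d %/ d')%N i0 ij jk ki => a; clear -a.
  lia.
- move=> i2 l; rewrite /Pset !eqz_mod_dvd.
  have Hi : (((i - 1) * s1)%N%:Z = (i * s1)%N%:Z - s1%:Z)%R.
    rewrite mulnBl mul1n -subzn //; apply: leq_pmull; clear -i2; lia.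
  rewrite Hi.
  have E1 : (l - s1%:Z - ((i * s1)%N%:Z - s1%:Z) = l - (i * s1)%N%:Z)%R
    by ring.
  have E2 : (l + t1%:Z - ((i * s1)%N%:Z - s1%:Z) = (l - (i * s1)%N%:Z) + (s1 + t1)%N%:Z)%R.
    by rewrite PoszD; ring.
  rewrite E1 E2.
  have hdz : (d%:Z %| (s1 + t1)%N%:Z)%Z by rewrite dvdzE.
  rewrite (rpredDr _ hdz).
  case: (d%:Z %| _)%Z; rewrite ?andbF ?andbT ?orbF //.
  rewrite /In_int; have := ltn_ord s1; have := ltn_ord t1.
  clear; lia.
Qed.
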